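(* In the Neutralization-Based Reclamation (NBR) scheme described in the context, no reclaimer thread ever reclaims (frees) an unsafe node; that is, no node freed by a reclaimer is subsequently accessed by any thread.
   Context: Setting: an asynchronous shared-memory system with a fixed set of threads operating on a linked concurrent data structure whose nodes are reached from a fixed set of entry points; a node that has been unlinked is retired by exactly one thread, and a node is unsafe for reclamation if some thread may still access it. NBR works as follows. Each thread has a private limbo bag of retired nodes, a thread-local atomic boolean flag restartable, and a row of a shared single-writer multi-reader array reservations (at most $r$ slots per thread). Each data structure operation consists of an optional preamble (no access to shared nodes), then one or more read phases each followed by a write phase. Immediately before a read phase the thread sets a checkpoint (via sigsetjmp); at the beginning of a read phase it clears its reservations and then stores true into restartable (sequentially consistent store); during a read phase it only reads, and only shared nodes discovered within that phase starting from an entry point. To end a read phase and enter the write phase, the thread writes pointers to all shared nodes it will access in the write phase into its reservation slots and then stores false into restartable (sequentially consistent store); in the write phase it accesses only nodes it reserved before entering the write phase, and on receipt of a signal it simply continues. On receipt of a neutralizing signal a thread runs a handler: if restartable is false it returns and continues; otherwise it jumps back (siglongjmp) to its last checkpoint, discarding all private references obtained in the read phase, and restarts the read phase from an entry point. A thread retires an unlinked node by appending it to its limbo bag; when the limbo bag exceeds a predetermined size threshold, the thread (a reclaimer) first sends a neutralizing signal to every participating thread, then scans the reservations of all threads, then frees every node in its limbo bag that is not reserved. Assumption: if a thread $T_i$ sends a signal to $T_j$, then by the time $T_i$ finishes sending it, $T_j$ has received it and will execute the signal handler before taking any further step of its program. *)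

(* Defs.v *)
From mathcomp Require Import all_boot.
Set Implicit Arguments. Unset Strict Implicit. Unset Printing Implicit Defensive.

(* Nodes and threads are natural numbers; the participating threads are
   0, ..., N-1; each thread has r reservation slots 0, ..., r-1. *)
Definition node := nat.
Definition thread := nat.

(* Idle      : outside an operation / in the preamble (no shared access)
   AtChk     : checkpoint (sigsetjmp) just set, read phase about to begin
   Cleared   : reservations cleared, restartable := true not yet stored
   Reading   : in the read phase (after restartable := true)
   Reserving : end of read phase, writing reservation slots
   Writing   : write phase (after restartable := false) *)
Inductive pcT := Idle | AtChk | Cleared | Reading | Reserving | Writing.

Inductive recT :=
| RNone
| RSignal of seq thread                   (* threads still to be signalled *)
| RScan of seq (thread * nat) & seq node. (* slots still to scan, reserved nodes seen *)

Record tstate := TS {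
  pc : pcT;
  restartable : bool;
  refs : seq node;   (* private references obtained in the current read phase *)
  vis : seq node;    (* (ghost) nodes linked at some time since the current
                        read phase started: exactly the nodes a traversal
                        starting from the entry points may discover *)
  own : seq node;    (* freshly allocated, not yet published nodes *)
  pend : seq node;   (* nodes unlinked by this thread, not yet retired *)
  limbo : seq node;
  rec : recT
}.

Record state := ST {
  th : thread -> tstate;
  resv : thread -> nat -> option node;
  linked : seq node;   (* nodes reachable from the entry points *)
  used : seq node;     (* nodes ever allocated *)
  freed : seq node
}.

Definition upd {A} (f : nat -> A) (i : nat) (v : A) : nat -> A :=
  fun j => if j == i then v else f j.

Definition set_th (s : state) t (ts : tstate) : state :=
  ST (upd (th s) t ts) (resv s) (linked s) (used s) (freed s).

(* Signal handler: if restartable, siglongjmp to the checkpoint, discarding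
   the private references of the read phase; otherwise simply return. *)
Definition handler (ts : tstate) : tstate :=
  if restartable ts then
    TS AtChk (restartable ts) [::] (vis ts) (own ts) (pend ts) (limbo ts) (rec ts)
  else ts.

Definition reserved_by (s : state) (r : nat) (t : thread) (x : node) : Prop :=
  exists2 k, k < r & resv s t k = Some x.

Inductive label := Access of thread & node | Tau.

Section Step.
Variables (N r threshold : nat).

Inductive step : state -> label -> state -> Prop :=
| s_begin s t ts : t < N -> th s t = ts -> rec ts = RNone -> pc ts = Idle ->
    step s Tau (set_th s t (TS AtChk (restartable ts) (refs ts) (vis ts)
                  (own ts) (pend ts) (limbo ts) (rec ts)))
| s_clear s t ts : t < N -> th s t = ts -> rec ts = RNone -> pc ts = AtChk ->
    step s Tau (ST (upd (th s) t (TS Cleared (restartable ts) (refs ts) (vis ts)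
                       (own ts) (pend ts) (limbo ts) (rec ts)))
                   (upd (resv s) t (fun _ => None)) (linked s) (used s) (freed s))
(* store true into restartable; the traversal starts from the entry points *)
| s_start s t ts : t < N -> th s t = ts -> rec ts = RNone -> pc ts = Cleared ->
    step s Tau (set_th s t (TS Reading true [::] (linked s)
                  (own ts) (pend ts) (limbo ts) (rec ts)))
| s_read s t ts x : t < N -> th s t = ts -> rec ts = RNone -> pc ts = Reading ->
    x \in vis ts ->
    step s (Access t x) (set_th s t (TS Reading (restartable ts) (x :: refs ts)
                  (vis ts) (own ts) (pend ts) (limbo ts) (rec ts)))
| s_reserve s t ts k x : t < N -> th s t = ts -> rec ts = RNone ->
    (pc ts = Reading \/ pc ts = Reserving) -> k < r -> x \in refs ts ->
    step s Tau (ST (upd (th s) t (TS Reserving (restartable ts) (refs ts) (vis ts)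
                       (own ts) (pend ts) (limbo ts) (rec ts)))
                   (upd (resv s) t (upd (resv s t) k (Some x)))
                   (linked s) (used s) (freed s))
| s_enterw s t ts : t < N -> th s t = ts -> rec ts = RNone ->
    (pc ts = Reading \/ pc ts = Reserving) ->
    step s Tau (set_th s t (TS Writing false (refs ts) (vis ts)
                  (own ts) (pend ts) (limbo ts) (rec ts)))
| s_waccess s t ts x : t < N -> th s t = ts -> rec ts = RNone -> pc ts = Writing ->
    (reserved_by s r t x \/ x \in own ts) ->
    step s (Access t x) s
| s_alloc s t ts x : t < N -> th s t = ts -> rec ts = RNone ->
    (pc ts = Idle \/ pc ts = Writing) -> x \notin used s ->
    step s Tau (ST (upd (th s) t (TS (pc ts) (restartable ts) (refs ts) (vis ts)
                       (x :: own ts) (pend ts) (limbo ts) (rec ts)))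
                   (resv s) (linked s) (x :: used s) (freed s))
| s_link s t ts x : t < N -> th s t = ts -> rec ts = RNone -> pc ts = Writing ->
    x \in own ts ->
    step s (Access t x)
      (ST (fun j => let tj := upd (th s) t (TS (pc ts) (restartable ts) (refs ts)
                                (vis ts) (rem x (own ts)) (pend ts) (limbo ts)
                                (rec ts)) j in
                    TS (pc tj) (restartable tj) (refs tj) (x :: vis tj) (own tj)
                       (pend tj) (limbo tj) (rec tj))
          (resv s) (x :: linked s) (used s) (freed s))
| s_unlink s t ts x : t < N -> th s t = ts -> rec ts = RNone -> pc ts = Writing ->
    x \in linked s -> reserved_by s r t x ->
    step s (Access t x)
      (ST (upd (th s) t (TS (pc ts) (restartable ts) (refs ts) (vis ts)
                           (own ts) (x :: pend ts) (limbo ts) (rec ts)))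
          (resv s) [seq y <- linked s | y != x] (used s) (freed s))
| s_retire s t ts x : t < N -> th s t = ts -> rec ts = RNone ->
    (pc ts = Idle \/ pc ts = Writing) -> x \in pend ts ->
    step s Tau (set_th s t (TS (pc ts) (restartable ts) (refs ts) (vis ts)
                  (own ts) (rem x (pend ts)) (x :: limbo ts) (rec ts)))
| s_endw s t ts (next : bool) : t < N -> th s t = ts -> rec ts = RNone ->
    pc ts = Writing ->
    step s Tau (set_th s t (TS (if next then AtChk else Idle) (restartable ts)
                  (refs ts) (vis ts) (own ts) (pend ts) (limbo ts) (rec ts)))
| s_rstart s t ts : t < N -> th s t = ts -> rec ts = RNone ->
    (pc ts = Idle \/ pc ts = Writing) -> threshold < size (limbo ts) ->
    step s Tau (set_th s t (TS (pc ts) (restartable ts) (refs ts) (vis ts)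
                  (own ts) (pend ts) (limbo ts)
                  (RSignal [seq j <- iota 0 N | j != t])))
(* send a neutralizing signal to j; by the delivery assumption j runs the
   handler before taking any further step *)
| s_signal s t ts j rest : t < N -> th s t = ts -> rec ts = RSignal (j :: rest) ->
    step s Tau (set_th (set_th s j (handler (th s j))) t
                  (TS (pc ts) (restartable ts) (refs ts) (vis ts)
                      (own ts) (pend ts) (limbo ts) (RSignal rest)))
| s_toscan s t ts : t < N -> th s t = ts -> rec ts = RSignal [::] ->
    step s Tau (set_th s t (TS (pc ts) (restartable ts) (refs ts) (vis ts)
                  (own ts) (pend ts) (limbo ts)
                  (RScan [seq (j, k) | j <- iota 0 N, k <- iota 0 r] [::])))
| s_scan s t ts j k rest acc : t < N -> th s t = ts ->
    rec ts = RScan ((j, k) :: rest) acc ->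
    step s Tau (set_th s t (TS (pc ts) (restartable ts) (refs ts) (vis ts)
                  (own ts) (pend ts) (limbo ts)
                  (RScan rest (if resv s j k is Some y then y :: acc else acc))))
| s_free s t ts acc : t < N -> th s t = ts -> rec ts = RScan [::] acc ->
    step s Tau
      (ST (upd (th s) t (TS (pc ts) (restartable ts) (refs ts) (vis ts)
                           (own ts) (pend ts) [seq x <- limbo ts | x \in acc] RNone))
          (resv s) (linked s) (used s)
          ([seq x <- limbo ts | x \notin acc] ++ freed s)).

Definition init_state (init_nodes : seq node) : state :=
  ST (fun _ => TS Idle false [::] [::] [::] [::] [::] RNone)
     (fun _ _ => None) init_nodes init_nodes [::].

Inductive reachable (init_nodes : seq node) : state -> Prop :=
| reach_init : reachable init_nodes (init_state init_nodes)
| reach_step s l s' : reachable init_nodes s -> step s l s' ->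
    reachable init_nodes s'.

End Step.

(* Main.v *)
Require Import Defs.
From mathcomp Require Import all_boot.
Set Implicit Arguments. Unset Strict Implicit. Unset Printing Implicit Defensive.

Definition isRd p := match p with Reading => true | _ => false end.
Definition isRR p := match p with Reading | Reserving => true | _ => false end.
Definition isRRW p := match p with Reading | Reserving | Writing => true | _ => false end.
Definition isIW p := match p with Idle | Writing => true | _ => false end.

Definition Sxt (r : nat) (ts : tstate) (row : nat -> option node) (x : node) : Prop :=
  (isRd (pc ts) -> x \notin vis ts) /\ (isRR (pc ts) -> x \notin refs ts) /\
  (isRRW (pc ts) -> forall k, k < r -> row k <> Some x).

Definition C_rs s := forall j, (isRR (pc (th s j)) -> restartable (th s j)) /\
   (isIW (pc (th s j)) -> restartable (th s j) = false).
Definition C_clr s := forall j k, pc (th s j) = Cleared -> resv s j k = None.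
Definition C_rec s := forall j, rec (th s j) <> RNone -> isIW (pc (th s j)).
Definition C_used s := forall x, x \notin used s -> x \notin linked s /\ x \notin freed s /\
   forall j, x \notin own (th s j) /\ x \notin pend (th s j) /\ x \notin limbo (th s j).
Definition C_own s := (forall j j' x, x \in own (th s j) -> x \in own (th s j') -> j = j') /\
   (forall j, uniq (own (th s j))) /\ (forall j x, x \in own (th s j) -> x \notin linked s).
Definition C_dead s := forall x, ((exists j, x \in pend (th s j)) \/ (exists j, x \in limbo (th s j))
   \/ x \in freed s) -> x \notin linked s /\ forall j', x \notin own (th s j').
Definition C_freed N r s := forall x, x \in freed s -> forall j, j < N -> Sxt r (th s j) (resv s j) x.
Definition C_sig N r s := forall u rest x, rec (th s u) = RSignal rest -> x \in limbo (th s u) ->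
   forall j, j < N -> j \notin rest -> Sxt r (th s j) (resv s j) x \/ pc (th s j) = Writing.
Definition C_scan N r s := forall u rest acc x, rec (th s u) = RScan rest acc -> x \in limbo (th s u) ->
   forall j, j < N -> Sxt r (th s j) (resv s j) x \/
     (pc (th s j) = Writing /\ forall k, k < r -> resv s j k = Some x -> (j,k) \in rest \/ x \in acc).

Record Inv N r s : Prop := { c_rs : C_rs s; c_clr : C_clr s; c_rec : C_rec s; c_used : C_used s;
  c_own : C_own s; c_dead : C_dead s; c_freed : C_freed N r s; c_sig : C_sig N r s;
  c_scan : C_scan N r s }.

Lemma Sxt_handler r ts row x : Sxt r ts row x -> Sxt r (handler ts) row x.
Proof. rewrite /handler; case: ifP => // _ _; by split. Qed.

Lemma handler_nRR ts : (isRR (pc ts) -> restartable ts) -> isRR (pc ts) -> pc (handler ts) = AtChk.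
Proof. by rewrite /handler => h /h ->. Qed.

Lemma handler_id ts : restartable ts = false -> handler ts = ts.
Proof. by rewrite /handler => ->. Qed.

Lemma Sxt_nRRW r ts row x : isRRW (pc ts) = false -> Sxt r ts row x.
Proof. by move=> h; rewrite /Sxt; case: (pc ts) h. Qed.

Ltac thc := rewrite /set_th /upd /=; case: eqP => [e|_] /=; [try (match goal with e : ?a = _ |- _ => subst a end)|].

Ltac same := rewrite /Sxt /=; split; [done | move=> ->; right; done].

Lemma Sx_pres N r th0 s l s' x : Inv N r s -> step N r th0 s l s' -> x \notin linked s ->
  (forall i, x \notin own (th s i)) -> forall j,
  (Sxt r (th s j) (resv s j) x -> Sxt r (th s' j) (resv s' j) x) /\
  (pc (th s j) = Writing -> Sxt r (th s' j) (resv s' j) x \/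
      (pc (th s' j) = Writing /\ resv s' j = resv s j)).
Proof.
move=> I st hl ho j; case: st I hl ho => {s l s'}.
- move=> s t ts _ <- _ hpc I hl ho; rewrite /set_th /upd /=; case: eqP => [->|_] //=.
  by rewrite hpc; split => // _; apply: Sxt_nRRW.
  same.
- move=> s t ts _ <- _ hpc I hl ho; rewrite /upd /=; case: eqP => [->|_] //=.
  by rewrite hpc; split => // _; apply: Sxt_nRRW.
  same.
- move=> s t ts _ <- _ hpc I hl ho; rewrite /set_th /upd /=; case: eqP => [->|_] //=.
  rewrite hpc; split => // _; split => //; split => // _ k _; by rewrite (c_clr I k hpc).
  same.
- move=> s t ts y _ <- _ hpc hy I hl ho; rewrite /set_th /upd /=; case: eqP => [->|_] //=.
  rewrite hpc; split => // -[h1 [h2 h3]].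
  rewrite /Sxt hpc /= in h1 h2 h3 *; split; first exact: h1.
  split; last by [].
  move=> _; rewrite in_cons negb_or (h2 erefl) andbT.
  by apply/negP => /eqP exy; move: (h1 erefl); rewrite exy hy.
  same.
- move=> s t ts k y _ <- _ hpc hk hy I hl ho; rewrite /upd /=; case: eqP => [->|_] //=.
  have hrr : isRR (pc (th s t)) by case: hpc => ->.
  split; last by case: hpc => ->.
  move=> [h1 [h2 h3]]; split => //; split => // [_|_ k' hk']; first exact: h2.
  case: eqP => [_ [e]|_]; first by move: (h2 hrr); rewrite -e hy.
  by apply: h3 => //; case: (pc (th s t)) hrr.
  same.
- move=> s t ts _ <- _ hpc I hl ho; rewrite /set_th /upd /=; case: eqP => [->|_] //=.
  split; last by case: hpc => ->.
  move=> [h1 [h2 h3]]; split => //; split => // _; apply: h3; by case: hpc => ->.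
  same.
- move=> s t ts y _ _ _ _ _ I hl ho; same.
- move=> s t ts y _ <- _ hpc hy I hl ho; rewrite /upd /=; case: eqP => [->|_]; same.
- move=> s t ts y _ <- _ hpc hy I hl ho; rewrite /upd /=.
  have hyx : x != y by apply: contraNneq (ho t) => ->.
  set tj := (if j == t then _ else _).
  have epc : pc tj = pc (th s j) by rewrite /tj; case: eqP => [->|].
  have ev : vis tj = vis (th s j) by rewrite /tj; case: eqP => [->|].
  have er : refs tj = refs (th s j) by rewrite /tj; case: eqP => [->|].
  rewrite /Sxt /= epc ev er in_cons (negbTE hyx) /=; split => // ->; by right.
- move=> s t ts y _ <- _ hpc hl' hr I hl ho; rewrite /upd /=; case: eqP => [->|_]; same.
- move=> s t ts y _ <- _ hpc hp I hl ho; rewrite /set_th /upd /=; case: eqP => [->|_]; same.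
- move=> s t ts nx _ <- _ hpc I hl ho; rewrite /set_th /upd /=; case: eqP => [->|_] //=.
  by split => _; [|left]; apply: Sxt_nRRW; case: nx.
  same.
- move=> s t ts _ <- _ hpc hsz I hl ho; rewrite /set_th /upd /=; case: eqP => [->|_]; same.
- move=> s t ts j0 rest _ <- hrec I hl ho; rewrite /set_th /upd /=; case: eqP => [->|_]; first same.
  case: eqP => [->|_] /=; last same.
  split; first exact: Sxt_handler.
  move=> hw; right; rewrite handler_id //; apply: (proj2 (c_rs I j0)); by rewrite hw.
- move=> s t ts _ <- _ I hl ho; rewrite /set_th /upd /=; case: eqP => [->|_]; same.
- move=> s t ts j0 k rest acc _ <- _ I hl ho; rewrite /set_th /upd /=; case: eqP => [->|_]; same.
- move=> s t ts acc _ <- _ I hl ho; rewrite /upd /=; case: eqP => [->|_]; same.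
Qed.

Lemma dead_pres N r th0 s l s' x : Inv N r s -> step N r th0 s l s' -> x \in used s ->
  x \notin linked s -> (forall i, x \notin own (th s i)) ->
  [/\ x \in used s', x \notin linked s' & forall i, x \notin own (th s' i)].
Proof.
move=> I st hu hl ho; case: st I hu hl ho => {s l s'}.
- move=> s t ts _ <- _ hpc I hu hl ho; split => // i; rewrite /set_th /upd /=; case: eqP => _ /=; try exact: ho.
- move=> s t ts _ <- _ hpc I hu hl ho; split => // i; rewrite /set_th /upd /=; case: eqP => _ /=; try exact: ho.
- move=> s t ts _ <- _ hpc I hu hl ho; split => // i; rewrite /set_th /upd /=; case: eqP => _ /=; try exact: ho.
- move=> s t ts y _ <- _ hpc hy I hu hl ho; split => // i; rewrite /set_th /upd /=; case: eqP => _ /=; try exact: ho.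
- move=> s t ts k y _ <- _ hpc hk hy I hu hl ho; split => // i; rewrite /set_th /upd /=; case: eqP => _ /=; try exact: ho.
- move=> s t ts _ <- _ hpc I hu hl ho; split => // i; rewrite /set_th /upd /=; case: eqP => _ /=; try exact: ho.
- move=> s t ts y _ _ _ _ _ I hu hl ho; by split.
- move=> s t ts y _ <- _ hpc hy I hu hl ho; split => //=; first by rewrite in_cons hu orbT.
  move=> i; rewrite /upd /=; case: eqP => _ /=; try exact: ho.
  rewrite in_cons negb_or ho andbT; by apply: contraNneq hy => <-.
- move=> s t ts y _ <- _ hpc hy I hu hl ho; split => //=.
    rewrite in_cons negb_or hl andbT; by apply: contraNneq (ho t) => ->.
  move=> i; rewrite /upd /=; case: eqP => _ /=; try exact: ho.
  by apply: contra (ho t); apply: mem_rem.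
- move=> s t ts y _ <- _ hpc hl' hr I hu hl ho; split => //=.
    by rewrite mem_filter negb_and hl orbT.
  move=> i; rewrite /upd /=; case: eqP => _ /=; try exact: ho.
- move=> s t ts y _ <- _ hpc hp I hu hl ho; split => // i; rewrite /set_th /upd /=; case: eqP => _ /=; try exact: ho.
- move=> s t ts nx _ <- _ hpc I hu hl ho; split => // i; rewrite /set_th /upd /=; case: eqP => _ /=; try exact: ho.
- move=> s t ts _ <- _ hpc hsz I hu hl ho; split => // i; rewrite /set_th /upd /=; case: eqP => _ /=; try exact: ho.
- move=> s t ts j0 rest _ <- hrec I hu hl ho; split => // i; rewrite /set_th /upd /=; case: eqP => _ /=; try exact: ho.
  case: eqP => _ /=; try exact: ho; rewrite /handler; case: ifP => _ /=; exact: ho.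
- move=> s t ts _ <- _ I hu hl ho; split => // i; rewrite /set_th /upd /=; case: eqP => _ /=; try exact: ho.
- move=> s t ts j0 k rest acc _ <- _ I hu hl ho; split => // i; rewrite /set_th /upd /=; case: eqP => _ /=; try exact: ho.
- move=> s t ts acc _ <- _ I hu hl ho; split => // i; rewrite /set_th /upd /=; case: eqP => _ /=; try exact: ho.
Qed.



Lemma C_rs_pres N r th0 s l s' : Inv N r s -> step N r th0 s l s' -> C_rs s'.
Proof.
move=> I st j; case: st I => {s l s'}.
- move=> s t ts _ <- _ hpc I; thc; [done | exact: c_rs I j].
- move=> s t ts _ <- _ hpc I; thc; [done | exact: c_rs I j].
- move=> s t ts _ <- _ hpc I; thc; [done | exact: c_rs I j].
- move=> s t ts y _ <- _ hpc hy I; thc; last exact: c_rs I j.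
  have := c_rs I t; rewrite hpc /= => -[h _]; split => // _; exact: h.
- move=> s t ts k y _ <- _ hpc hk hy I; thc; last exact: c_rs I j.
  have := c_rs I t; case: hpc => -> [h _]; split => // _; exact: h.
- move=> s t ts _ <- _ hpc I; thc; [done | exact: c_rs I j].
- move=> s t ts y _ _ _ _ _ I; exact: c_rs I j.
- move=> s t ts y _ <- _ hpc hy I; thc; [exact: c_rs I t | exact: c_rs I j].
- move=> s t ts y _ <- _ hpc hy I; thc; [exact: c_rs I t | exact: c_rs I j].
- move=> s t ts y _ <- _ hpc hl hr I; thc; [exact: c_rs I t | exact: c_rs I j].
- move=> s t ts y _ <- _ hpc hp I; thc; [exact: c_rs I t | exact: c_rs I j].
- move=> s t ts nx _ <- _ hpc I; thc; last exact: c_rs I j.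
  have := c_rs I t; rewrite hpc /= => -[_ h]; case: nx => //; split => // _; exact: h.
- move=> s t ts _ <- _ hpc hsz I; thc; [exact: c_rs I t | exact: c_rs I j].
- move=> s t ts j0 rest _ <- hrec I; thc; first exact: c_rs I t.
  case: eqP => [e|_]; last exact: c_rs I j.
  rewrite /handler; case: ifP => _ //; exact: c_rs I j0.
- move=> s t ts _ <- _ I; thc; [exact: c_rs I t | exact: c_rs I j].
- move=> s t ts j0 k rest acc _ <- _ I; thc; [exact: c_rs I t | exact: c_rs I j].
- move=> s t ts acc _ <- _ I; thc; [exact: c_rs I t | exact: c_rs I j].
Qed.

Lemma C_clr_pres N r th0 s l s' : Inv N r s -> step N r th0 s l s' -> C_clr s'.
Proof.
move=> I st j k; case: st I => {s l s'}.
- move=> s t ts _ <- _ hpc I; thc; [done | exact: c_clr I j k].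
- move=> s t ts _ <- _ hpc I; thc; [done | exact: c_clr I j k].
- move=> s t ts _ <- _ hpc I; thc; [done | exact: c_clr I j k].
- move=> s t ts y _ <- _ hpc hy I; thc; [done | exact: c_clr I j k].
- move=> s t ts k' y _ <- _ hpc hk hy I; thc; [done | exact: c_clr I j k].
- move=> s t ts _ <- _ hpc I; thc; [done | exact: c_clr I j k].
- move=> s t ts y _ _ _ _ _ I; exact: c_clr I j k.
- move=> s t ts y _ <- _ hpc hy I; thc; [exact: c_clr I t k | exact: c_clr I j k].
- move=> s t ts y _ <- _ hpc hy I; thc; [exact: c_clr I t k | exact: c_clr I j k].
- move=> s t ts y _ <- _ hpc hl hr I; thc; [exact: c_clr I t k | exact: c_clr I j k].
- move=> s t ts y _ <- _ hpc hp I; thc; [exact: c_clr I t k | exact: c_clr I j k].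
- move=> s t ts nx _ <- _ hpc I; thc; last exact: c_clr I j k. by case: nx.
- move=> s t ts _ <- _ hpc hsz I; thc; [exact: c_clr I t k | exact: c_clr I j k].
- move=> s t ts j0 rest _ <- hrec I; thc; first exact: c_clr I t k.
  case: eqP => [e|_]; last exact: c_clr I j k.
  subst j; rewrite /handler; case: ifP => _ //; exact: c_clr I j0 k.
- move=> s t ts _ <- _ I; thc; [exact: c_clr I t k | exact: c_clr I j k].
- move=> s t ts j0 k' rest acc _ <- _ I; thc; [exact: c_clr I t k | exact: c_clr I j k].
- move=> s t ts acc _ <- _ I; thc; [exact: c_clr I t k | exact: c_clr I j k].
Qed.

Lemma C_rec_pres N r th0 s l s' : Inv N r s -> step N r th0 s l s' -> C_rec s'.
Proof.
move=> I st j; case: st I => {s l s'}.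
- move=> s t ts _ <- hr hpc I; thc; [by rewrite hr | exact: c_rec I j].
- move=> s t ts _ <- hr hpc I; thc; [by rewrite hr | exact: c_rec I j].
- move=> s t ts _ <- hr hpc I; thc; [by rewrite hr | exact: c_rec I j].
- move=> s t ts y _ <- hr hpc hy I; thc; [by rewrite hr | exact: c_rec I j].
- move=> s t ts k' y _ <- hr hpc hk hy I; thc; [by rewrite hr | exact: c_rec I j].
- move=> s t ts _ <- hr hpc I; thc; [by rewrite hr | exact: c_rec I j].
- move=> s t ts y _ _ _ _ _ I; exact: c_rec I j.
- move=> s t ts y _ <- hr hpc hy I; thc; [by rewrite hr | exact: c_rec I j].
- move=> s t ts y _ <- hr hpc hy I; thc; [by rewrite hr | exact: c_rec I j].
- move=> s t ts y _ <- hr hpc hl hr' I; thc; [by rewrite hr | exact: c_rec I j].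
- move=> s t ts y _ <- hr hpc hp I; thc; [by rewrite hr | exact: c_rec I j].
- move=> s t ts nx _ <- hr hpc I; thc; [by rewrite hr | exact: c_rec I j].
- move=> s t ts _ <- hr hpc hsz I; thc; last exact: c_rec I j. by case: hpc => ->.
- move=> s t ts j0 rest _ <- hrec I; thc; first by move=> _; apply: (c_rec I); rewrite hrec.
  case: eqP => [e|_]; last exact: c_rec I j.
  subst j;   rewrite /handler; case: ifP => hres //=; last exact: c_rec I j0.
  move=> hn; have := c_rec I hn; have := proj2 (c_rs I j0).
  by move=> h1 h2; rewrite (h1 h2) in hres.
- move=> s t ts _ <- hr I; thc; [by move=> _; apply: (c_rec I); rewrite hr | exact: c_rec I j].
- move=> s t ts j0 k' rest acc _ <- hr I; thc; [by move=> _; apply: (c_rec I); rewrite hr | exact: c_rec I j].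
- move=> s t ts acc _ <- _ I; thc; [done | exact: c_rec I j].
Qed.

Lemma notin_used N r s x : Inv N r s -> x \notin used s -> x \notin linked s /\ x \notin freed s /\
   forall j, x \notin own (th s j) /\ x \notin pend (th s j) /\ x \notin limbo (th s j).
Proof. by move=> I; apply: (c_used I). Qed.

Lemma used_linked N r s x : Inv N r s -> x \in linked s -> x \in used s.
Proof. move=> I h; apply/negPn/negP => /(notin_used I) [h1 _]; by rewrite h in h1. Qed.
Lemma used_freed N r s x : Inv N r s -> x \in freed s -> x \in used s.
Proof. move=> I h; apply/negPn/negP => /(notin_used I) [_ [h1 _]]; by rewrite h in h1. Qed.
Lemma used_own N r s x j : Inv N r s -> x \in own (th s j) -> x \in used s.
Proof. move=> I h; apply/negPn/negP => /(notin_used I) [_ [_ /(_ j) [h1 _]]]; by rewrite h in h1. Qed.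
Lemma used_pend N r s x j : Inv N r s -> x \in pend (th s j) -> x \in used s.
Proof. move=> I h; apply/negPn/negP => /(notin_used I) [_ [_ /(_ j) [_ [h1 _]]]]; by rewrite h in h1. Qed.
Lemma used_limbo N r s x j : Inv N r s -> x \in limbo (th s j) -> x \in used s.
Proof. move=> I h; apply/negPn/negP => /(notin_used I) [_ [_ /(_ j) [_ [_ h1]]]]; by rewrite h in h1. Qed.

Ltac gen_used I x hx := 
  let h1 := fresh in let h2 := fresh in let h3 := fresh in
  have [h1 [h2 h3]] := notin_used I hx; split => //; split => // ?; thc; [exact: h3 | exact: h3].

Lemma C_used_pres N r th0 s l s' : Inv N r s -> step N r th0 s l s' -> C_used s'.
Proof.
move=> I st x hx; case: st I hx => {s l s'}.
- move=> s t ts _ <- _ hpc I hx; gen_used I x hx.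
- move=> s t ts _ <- _ hpc I hx; gen_used I x hx.
- move=> s t ts _ <- _ hpc I hx; gen_used I x hx.
- move=> s t ts y _ <- _ hpc hy I hx; gen_used I x hx.
- move=> s t ts k' y _ <- _ hpc hk hy I hx; gen_used I x hx.
- move=> s t ts _ <- _ hpc I hx; gen_used I x hx.
- move=> s t ts y _ _ _ _ _ I hx; exact: (c_used I).
- move=> s t ts y _ <- _ hpc hy I /=; rewrite in_cons negb_or => /andP [hxy hx].
  have [h1 [h2 h3]] := notin_used I hx; split => //; split => // j; thc; last exact: h3.
  rewrite in_cons negb_or hxy; exact: h3.
- move=> s t ts y _ <- _ hpc hy I /= hx.
  have [h1 [h2 h3]] := notin_used I hx.
  have hxy : x != y by apply/negP => /eqP exy; move: hx; rewrite exy (used_own I hy).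
  split; first by rewrite in_cons negb_or hxy.
  split => // j; rewrite /upd /=; case: eqP => _ /=; last exact: h3.
  have [h4 h5] := h3 t; split => //; apply: contra h4; exact: mem_rem.
- move=> s t ts y _ <- _ hpc hl hr I /= hx.
  have [h1 [h2 h3]] := notin_used I hx.
  have hxy : x != y by apply/negP => /eqP exy; move: hx; rewrite exy (used_linked I hl).
  split; first by rewrite mem_filter negb_and h1 orbT.
  split => // j; rewrite /upd /=; case: eqP => _ /=; last exact: h3.
  by rewrite in_cons negb_or hxy.
- move=> s t ts y _ <- _ hpc hp I /= hx.
  have [h1 [h2 h3]] := notin_used I hx.
  have hxy : x != y by apply/negP => /eqP exy; move: hx; rewrite exy (used_pend I hp).
  split => //; split => // j; rewrite /set_th /upd /=; case: eqP => _ /=; last exact: h3.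
  have [h4 [h5 h6]] := h3 t; split => //; split; first by apply: contra h5; exact: mem_rem.
  by rewrite in_cons negb_or hxy.
- move=> s t ts nx _ <- _ hpc I hx; gen_used I x hx.
- move=> s t ts _ <- _ hpc hsz I hx; gen_used I x hx.
- move=> s t ts j0 rest _ <- hrec I hx.
  have [h1 [h2 h3]] := notin_used I hx; split => //; split => // j.
  rewrite /set_th /upd /=; case: eqP => _ /=; first exact: h3.
  case: eqP => _ /=; last exact: h3.
  rewrite /handler; case: ifP => _ /=; exact: h3.
- move=> s t ts _ <- _ I hx; gen_used I x hx.
- move=> s t ts j0 k' rest acc _ <- _ I hx; gen_used I x hx.
- move=> s t ts acc _ <- _ I /= hx.
  have [h1 [h2 h3]] := notin_used I hx.
  have hl : x \notin limbo (th s t) by have [_ [_ h]] := h3 t.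
  split => //; split.
    by rewrite mem_cat negb_or h2 andbT mem_filter negb_and hl orbT.
  move=> j; rewrite /upd /=; case: eqP => _ /=; last exact: h3.
  have [h4 [h5 h6]] := h3 t; split => //; split => //.
  by rewrite mem_filter negb_and h6 orbT.
Qed.

Lemma C_own_frame N r s s' : Inv N r s -> (forall j, own (th s' j) = own (th s j)) ->
  (forall x, x \in linked s' -> x \in linked s) -> C_own s'.
Proof.
move=> I ho hl; have [o1 [o2 o3]] := c_own I.
split; first by move=> j j' x; rewrite !ho; apply: o1.
split; first by move=> j; rewrite ho.
move=> j x; rewrite ho => /o3; apply: contra; exact: hl.
Qed.

Lemma C_own_pres N r th0 s l s' : Inv N r s -> step N r th0 s l s' -> C_own s'.
Proof.
move=> I st; case: st I => {s l s'}.
- move=> s t ts _ <- _ hpc I; apply: C_own_frame I _ _ => // j; by thc.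
- move=> s t ts _ <- _ hpc I; apply: C_own_frame I _ _ => // j; by thc.
- move=> s t ts _ <- _ hpc I; apply: C_own_frame I _ _ => // j; by thc.
- move=> s t ts y _ <- _ hpc hy I; apply: C_own_frame I _ _ => // j; by thc.
- move=> s t ts k' y _ <- _ hpc hk hy I; apply: C_own_frame I _ _ => // j; by thc.
- move=> s t ts _ <- _ hpc I; apply: C_own_frame I _ _ => // j; by thc.
- move=> s t ts y _ _ _ _ _ I; exact: (c_own I).
- move=> s t ts y _ <- _ hpc hy I.
  have [o1 [o2 o3]] := c_own I.
  have [hy1 [_ hy3]] := notin_used I hy.
  have E : forall i z, (z \in own (th (ST (upd (th s) t (TS (pc (th s t)) (restartable (th s t))
      (refs (th s t)) (vis (th s t)) (y :: own (th s t)) (pend (th s t)) (limbo (th s t))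
      (rec (th s t)))) (resv s) (linked s) (y :: used s) (freed s)) i)) =
      ((i == t) && (z == y)) || (z \in own (th s i)).
    move=> i z; rewrite /upd /=; case: eqP => [->|_] /=; first by rewrite in_cons.
    done.
  split.
    move=> j j' x; rewrite !E.
    case: (x =P y) => [->|_]; last by rewrite !andbF /=; apply: o1.
    have [h _] := hy3 j; have [h' _] := hy3 j'.
    rewrite (negbTE h) (negbTE h') !andbT !orbF => /eqP -> /eqP ->; done.
  split.
    move=> j; rewrite /upd /=; case: eqP => _ /=; last exact: o2.
    rewrite o2 andbT; exact: (proj1 (hy3 t)).
  move=> j x; rewrite E /= => /orP [/andP [_ /eqP ->] //|]; exact: o3.
- move=> s t ts y _ <- _ hpc hy I.
  have [o1 [o2 o3]] := c_own I.
  have E : forall i z, z \in own (th (ST (fun j => let tj := upd (th s) t (TS (pc (th s t)) (restartable (th s t)) (refs (th s t))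
                                (vis (th s t)) (rem y (own (th s t))) (pend (th s t)) (limbo (th s t))
                                (rec (th s t))) j in
                    TS (pc tj) (restartable tj) (refs tj) (y :: vis tj) (own tj)
                       (pend tj) (limbo tj) (rec tj))
          (resv s) (y :: linked s) (used s) (freed s)) i) -> z \in own (th s i) /\ z != y.
    move=> i z; rewrite /upd /=; case: eqP => [->|ne] /=.
      by rewrite (mem_rem_uniq _ (o2 t)) inE => /andP [-> ->].
    move=> hz; split => //; apply/negP => /eqP ezy; apply: ne; apply: (o1 _ _ z) => //.
    by rewrite ezy.
  split.
    move=> j j' x /E [h1 _] /E [h2 _]; exact: o1 h1 h2.
  split.
    move=> j; rewrite /upd /=; case: eqP => _ /=; last exact: o2.
    exact: rem_uniq.
  move=> j x /E [h1 h2] /=; rewrite in_cons negb_or h2 /=; exact: o3 h1.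
- move=> s t ts y _ <- _ hpc hl hr I; apply: C_own_frame I _ _ => [j|x]; first by thc.
  by rewrite mem_filter => /andP [].
- move=> s t ts y _ <- _ hpc hp I; apply: C_own_frame I _ _ => // j; by thc.
- move=> s t ts nx _ <- _ hpc I; apply: C_own_frame I _ _ => // j; by thc.
- move=> s t ts _ <- _ hpc hsz I; apply: C_own_frame I _ _ => // j; by thc.
- move=> s t ts j0 rest _ <- hrec I; apply: C_own_frame I _ _ => // j; thc; first done.
  case: eqP => [->|_] //; rewrite /handler; by case: ifP.
- move=> s t ts _ <- _ I; apply: C_own_frame I _ _ => // j; by thc.
- move=> s t ts j0 k' rest acc _ <- _ I; apply: C_own_frame I _ _ => // j; by thc.
- move=> s t ts acc _ <- _ I; apply: C_own_frame I _ _ => // j; by thc.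
Qed.

Definition dpre s z := (exists j, z \in pend (th s j)) \/ (exists j, z \in limbo (th s j)) \/ z \in freed s.

Lemma C_dead_frame N r s s' : Inv N r s -> (forall j z, z \in own (th s' j) -> z \in own (th s j)) ->
  (forall z, z \in linked s' -> z \in linked s) -> (forall z, dpre s' z -> dpre s z) -> C_dead s'.
Proof.
move=> I ho hl hd x /hd /(c_dead I) [h1 h2]; split.
  by apply: contra h1; apply: hl.
by move=> j; apply: contra (h2 j); apply: ho.
Qed.

Lemma C_dead_frame2 N r s s' : Inv N r s -> (forall j z, z \in own (th s' j) -> z \in own (th s j)) ->
  (forall z, z \in linked s' -> z \in linked s) ->
  (forall j z, z \in pend (th s' j) -> z \in pend (th s j)) ->
  (forall j z, z \in limbo (th s' j) -> z \in limbo (th s j)) ->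
  (forall z, z \in freed s' -> z \in freed s) -> C_dead s'.
Proof.
move=> I ho hl hp hli hf; apply: C_dead_frame I ho hl _.
move=> z [[j /hp h]|[[j /hli h]|/hf h]]; [left; by exists j | right; left; by exists j | by right; right].
Qed.

Ltac dsame I := apply: C_dead_frame2 I _ _ _ _ _ => //; by move=> ? ?; thc.

Lemma C_dead_pres N r th0 s l s' : Inv N r s -> step N r th0 s l s' -> C_dead s'.
Proof.
move=> I st; case: st I => {s l s'}.
- move=> s t ts _ <- _ hpc I; dsame I.
- move=> s t ts _ <- _ hpc I; dsame I.
- move=> s t ts _ <- _ hpc I; dsame I.
- move=> s t ts y _ <- _ hpc hy I; dsame I.
- move=> s t ts k' y _ <- _ hpc hk hy I; dsame I.
- move=> s t ts _ <- _ hpc I; dsame I.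
- move=> s t ts y _ _ _ _ _ I; exact: (c_dead I).
- move=> s t ts y _ <- _ hpc hy I.
  have [hy1 [hy2 hy3]] := notin_used I hy.
  move=> x hx.
  have hx' : dpre s x by move: hx; rewrite /dpre /upd /=; case=> [[j]|[[j]|]]; try (case: eqP => _ /=); eauto.
  have [h1 h2] := c_dead I hx'; split => // j; thc; last exact: h2.
  rewrite in_cons negb_or h2 andbT; apply/negP => /eqP exy; subst x.
  case: hx' => [[i]|[[i]|]]; [have [_ [h _]] := hy3 i | have [_ [_ h]] := hy3 i | move: hy2 => h]; by rewrite (negbTE h).
- move=> s t ts y _ <- _ hpc hy I.
  move=> x hx.
  have hx' : dpre s x by move: hx; rewrite /dpre /upd /=; case=> [[j]|[[j]|]]; try (case: eqP => _ /=); eauto.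
  have [h1 h2] := c_dead I hx'; split.
    rewrite /= in_cons negb_or h1 andbT; apply/negP => /eqP exy; subst x.
    by move: (h2 t); rewrite hy.
  move=> j; rewrite /upd /=; case: eqP => _ /=; last exact: h2.
  apply: contra (h2 t); exact: mem_rem.
- move=> s t ts y _ <- _ hpc hl hr I.
  move=> x; rewrite /dpre /upd /=.
  have [o1 [o2 o3]] := c_own I.
  case: (x =P y) => [->|nxy] hx.
    split; first by rewrite mem_filter eqxx.
    move=> j; case: eqP => _ /=; apply/negP => /o3; by rewrite hl.
  have hx' : dpre s x.
    have nxy' : (x == y) = false by apply/eqP.
    move: hx => [[j hj]|[[j hj]|hf]].
    - case: eqP hj => _ /= hj; last by left; exists j.
      rewrite in_cons nxy' /= in hj; left; by exists t.
    - case: eqP hj => _ /= hj; [right; left; by exists t | right; left; by exists j].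
    - by right; right.
  have [h1 h2] := c_dead I hx'; split.
    by rewrite mem_filter negb_and h1 orbT.
  move=> j; case: eqP => _ /=; exact: h2.
- move=> s t ts y _ <- _ hpc hp I.
  apply: C_dead_frame I _ _ _ => //; first by move=> j z; thc.
  move=> z; rewrite /dpre /set_th /upd /=.
  case=> [[j]|[[j]|hf]]; [case: eqP => _ /= | case: eqP => _ /= | by right; right].
  - move/mem_rem => h; left; by exists t.
  - move=> h; left; by exists j.
  - rewrite in_cons => /orP [/eqP ->|h]; [left; by exists t | right; left; by exists t].
  - move=> h; right; left; by exists j.
- move=> s t ts nx _ <- _ hpc I; dsame I.
- move=> s t ts _ <- _ hpc hsz I; dsame I.
- move=> s t ts j0 rest _ <- hrec I; apply: C_dead_frame2 I _ _ _ _ _ => //;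
  by move=> j z; thc; [done | case: eqP => [->|_] //; rewrite /handler; case: ifP].
- move=> s t ts _ <- _ I; dsame I.
- move=> s t ts j0 k' rest acc _ <- _ I; dsame I.
- move=> s t ts acc _ <- _ I.
  apply: C_dead_frame I _ _ _ => //; first by move=> j z; thc.
  move=> z; rewrite /dpre /upd /=; case=> [[j]|[[j]|hf]]; [case: eqP => _ /= | case: eqP => _ /= | ].
  - move=> h; left; by exists t.
  - move=> h; left; by exists j.
  - rewrite mem_filter => /andP [_ h]; right; left; by exists t.
  - move=> h; right; left; by exists j.
  - move: hf; rewrite mem_cat mem_filter => /orP [/andP [_ h]|h]; [right; left; by exists t | by right; right].
Qed.

Lemma dead_limbo N r s u x : Inv N r s -> x \in limbo (th s u) ->
  x \notin linked s /\ forall i, x \notin own (th s i).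
Proof. move=> I h; apply: (c_dead I); right; left; by exists u. Qed.
Lemma dead_freed N r s x : Inv N r s -> x \in freed s ->
  x \notin linked s /\ forall i, x \notin own (th s i).
Proof. move=> I h; apply: (c_dead I); by right; right. Qed.

Lemma handler_rec ts : rec (handler ts) = rec ts.
Proof. by rewrite /handler; case: ifP. Qed.
Lemma handler_limbo ts : limbo (handler ts) = limbo ts.
Proof. by rewrite /handler; case: ifP. Qed.

Lemma IW_or r ts row x : isIW (pc ts) -> Sxt r ts row x \/ pc ts = Writing.
Proof. case E: (pc ts) => // _; [left; apply: Sxt_nRRW; by rewrite E | by right]. Qed.

Lemma handler_or r ts row x : (isRR (pc ts) -> restartable ts) ->
  Sxt r (handler ts) row x \/ pc (handler ts) = Writing.
Proof.
rewrite /handler; case: ifP => hr h; first by left; apply: Sxt_nRRW.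
case E: (pc ts) => [| | | | |].
- left; apply: Sxt_nRRW; by rewrite E.
- left; apply: Sxt_nRRW; by rewrite E.
- left; apply: Sxt_nRRW; by rewrite E.
- have e : isRR (pc ts) by rewrite E.
  by move: (h e).
- have e : isRR (pc ts) by rewrite E.
  by move: (h e).
- by right.
Qed.

Lemma C_freed_pres N r th0 s l s' : Inv N r s -> step N r th0 s l s' -> C_freed N r s'.
Proof.
move=> I st x hx j hj.
have P : forall y, y \notin linked s -> (forall i, y \notin own (th s i)) ->
   Sxt r (th s j) (resv s j) y -> Sxt r (th s' j) (resv s' j) y.
  by move=> y hl ho; apply: (proj1 (Sx_pres I st hl ho j)).
have K : x \in freed s -> Sxt r (th s' j) (resv s' j) x.
  move=> hf; have [hl ho] := dead_freed I hf; apply: P hl ho _; exact: (c_freed I hf hj).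
case: st I P K hx => {s l s'}; try by move=> * ; match goal with K : _ -> ?g |- ?g => apply: K end.
move=> s t ts acc _ <- hr I P K /=; rewrite mem_cat => /orP [|]; last exact: K.
rewrite mem_filter => /andP [hxa hxl].
have [hl ho] := dead_limbo I hxl; apply: P hl ho _.
case: (c_scan I hr hxl hj) => // -[hw hc].
rewrite /Sxt hw /=; split; first by []. split; first by []. move=> _ k hk e.
by case: (hc k hk e) => //; rewrite (negbTE hxa).
Qed.

Ltac gsig := rewrite /set_th /upd /=; case: eqP => [e|ne] /=;
  [ subst; let H := fresh in intro H;
    match goal with h0 : rec (th _ _) = RNone |- _ => rewrite h0 in H; discriminate end
  | let H1 := fresh in let H2 := fresh in let H3 := fresh in intros H1 H2 H3;
    match goal with Fr : forall _, _ |- _ => exact: (Fr _ H1 H2 H3) end ].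

Lemma C_sig_pres N r th0 s l s' : Inv N r s -> step N r th0 s l s' -> C_sig N r s'.
Proof.
move=> I st u rest x hr hx j hj hjr.
have Fr : forall rest0, rec (th s u) = RSignal rest0 -> x \in limbo (th s u) -> j \notin rest0 ->
    Sxt r (th s' j) (resv s' j) x \/ pc (th s' j) = Writing.
  move=> rest0 h1 h2 h3; have [hl ho] := dead_limbo I h2.
  have [P1 P2] := Sx_pres I st hl ho j.
  case: (c_sig I h1 h2 hj h3) => [h|h]; first by left; exact: P1.
  by case: (P2 h) => [?|[? _]]; [left|right].
case: st I Fr hr hx hjr => {s l s'}.
- move=> s t ts _ <- h0 hpc I Fr; gsig.
- move=> s t ts _ <- h0 hpc I Fr; gsig.
- move=> s t ts _ <- h0 hpc I Fr; gsig.
- move=> s t ts y _ <- h0 hpc hy I Fr; gsig.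
- move=> s t ts k' y _ <- h0 hpc hk hy I Fr; gsig.
- move=> s t ts _ <- h0 hpc I Fr; gsig.
- move=> s t ts y _ _ _ _ _ I Fr; exact: Fr.
- move=> s t ts y _ <- h0 hpc hy I Fr; gsig.
- move=> s t ts y _ <- h0 hpc hy I Fr; gsig.
- move=> s t ts y _ <- h0 hpc hl hr' I Fr; gsig.
- move=> s t ts y _ <- h0 hpc hp I Fr; gsig.
- move=> s t ts nx _ <- h0 hpc I Fr; gsig.
- move=> s t ts _ <- h0 hpc hsz I Fr; rewrite /set_th /upd /=; case: eqP => [e|ne] /=; last first.
    move=> H1 H2 H3; exact: (Fr _ H1 H2 H3).
  subst u => -[<-] hx hjr.
  have ejt : j = t.
    move: hjr; rewrite mem_filter mem_iota hj /= andbT negbK; by move/eqP.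
  subst j; rewrite eqxx /=; case: hpc => ->; [left; exact: Sxt_nRRW | by right].
- move=> s t ts j0 rest0 _ <- hrec I Fr; rewrite /set_th /upd /=; case: eqP => [e|ne] /=; last first.
    case: eqP => [e'|_]; try subst u; rewrite ?handler_rec ?handler_limbo => H1 H2 H3; exact: (Fr _ H1 H2 H3).
  subst u => -[<-] hx hjr.
  case: (j =P j0) => [ej|nj]; last first.
    have hn : j \notin j0 :: rest0 by rewrite in_cons negb_or hjr andbT; apply/eqP.
    have nj' : (j == j0) = false by apply/eqP.
    by move: (Fr _ hrec hx hn); rewrite /set_th /upd /= nj'.
  subst j; case: (j0 =P t) => [e|ne] /=.
    subst j0; have : isIW (pc (th s t)) by apply: (c_rec I); rewrite hrec.
    case: (pc (th s t)) => // _; [left; exact: Sxt_nRRW | by right].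
  apply: handler_or; exact: (proj1 (c_rs I j0)).
- move=> s t ts _ <- hrec I Fr; rewrite /set_th /upd /=; case: eqP => [e|ne] /=; last first.
    move=> H1 H2 H3; exact: (Fr _ H1 H2 H3).
  by [].
- move=> s t ts j0 k' rest0 acc _ <- hrec I Fr; rewrite /set_th /upd /=; case: eqP => [e|ne] /=; last first.
    move=> H1 H2 H3; exact: (Fr _ H1 H2 H3).
  by [].
- move=> s t ts acc _ <- hrec I Fr; rewrite /upd /=; case: eqP => [e|ne] /=; last first.
    move=> H1 H2 H3; exact: (Fr _ H1 H2 H3).
  by [].
Qed.

Ltac gscan := rewrite /set_th /upd /=; case: eqP => [e|ne] /=;
  [ subst; let H := fresh in intro H;
    match goal with h0 : rec (th _ _) = RNone |- _ => rewrite h0 in H; discriminate end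
  | let H1 := fresh in let H2 := fresh in intros H1 H2;
    match goal with Fr : forall _ _, _ |- _ => exact: (Fr _ _ H1 H2) end ].

Lemma C_scan_pres N r th0 s l s' : Inv N r s -> step N r th0 s l s' -> C_scan N r s'.
Proof.
move=> I st u rest acc x hr hx j hj.
have Fr : forall rest0 acc0, rec (th s u) = RScan rest0 acc0 -> x \in limbo (th s u) ->
    Sxt r (th s' j) (resv s' j) x \/ (pc (th s' j) = Writing /\
     forall k, k < r -> resv s' j k = Some x -> (j,k) \in rest0 \/ x \in acc0).
  move=> rest0 acc0 h1 h2; have [hl ho] := dead_limbo I h2.
  have [P1 P2] := Sx_pres I st hl ho j.
  case: (c_scan I h1 h2 hj) => [h|[h hc]]; first by left; exact: P1.
  case: (P2 h) => [?|[hw he]]; first by left.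
  by right; split => // k hk; rewrite he; apply: hc.
have Fs : forall u0, rec (th s u0) = RSignal [::] -> x \in limbo (th s u0) ->
    Sxt r (th s' j) (resv s' j) x \/ (pc (th s' j) = Writing /\ resv s' j = resv s j).
  move=> u0 h1 h2; have [hl ho] := dead_limbo I h2.
  have [P1 P2] := Sx_pres I st hl ho j.
  have hn : j \notin [::] by rewrite in_nil.
  case: (c_sig I h1 h2 hj hn) => [h|h]; first by left; exact: P1.
  exact: P2 h.
move: Fs hr hx; case: st I Fr => {s l s'}.
- move=> s t ts _ <- h0 hpc I Fr _; gscan.
- move=> s t ts _ <- h0 hpc I Fr _; gscan.
- move=> s t ts _ <- h0 hpc I Fr _; gscan.
- move=> s t ts y _ <- h0 hpc hy I Fr _; gscan.
- move=> s t ts k' y _ <- h0 hpc hk hy I Fr _; gscan.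
- move=> s t ts _ <- h0 hpc I Fr _; gscan.
- move=> s t ts y _ _ _ _ _ I Fr _; exact: Fr.
- move=> s t ts y _ <- h0 hpc hy I Fr _; gscan.
- move=> s t ts y _ <- h0 hpc hy I Fr _; gscan.
- move=> s t ts y _ <- h0 hpc hl hr' I Fr _; gscan.
- move=> s t ts y _ <- h0 hpc hp I Fr _; gscan.
- move=> s t ts nx _ <- h0 hpc I Fr _; gscan.
- move=> s t ts _ <- h0 hpc hsz I Fr _; rewrite /set_th /upd /=; case: eqP => [e|ne] /=; last first.
    move=> H1 H2; exact: (Fr _ _ H1 H2).
  by [].
- move=> s t ts j0 rest0 _ <- hrec I Fr _; rewrite /set_th /upd /=; case: eqP => [e|ne] /=; last first.
    case: eqP => [e'|_]; try subst u; rewrite ?handler_rec ?handler_limbo => H1 H2; exact: (Fr _ _ H1 H2).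
  by [].
- move=> s t ts _ <- hrec I Fr Fs; rewrite /set_th /upd /=; case: eqP => [e|ne] /=; last first.
    move=> H1 H2; exact: (Fr _ _ H1 H2).
  subst u => -[<- <-] hx.
  case: (Fs _ hrec hx) => [h|[hw he]]; first by left.
  right; split; first exact: hw.
  move=> k hk _; left; apply: allpairs_f; by rewrite mem_iota.
- move=> s t ts j0 k0 rest0 acc0 _ <- hrec I Fr _; rewrite /set_th /upd /=; case: eqP => [e|ne] /=; last first.
    move=> H1 H2; exact: (Fr _ _ H1 H2).
  subst u => -[<- <-] hx.
  case: (Fr _ _ hrec hx) => [h|[hw hc]]; first by left.
  right; split; first exact: hw.
  move=> k hk e; case: (hc k hk e); last first.
    by move=> ha; right; case: (resv s j0 k0) => [y|] //; rewrite in_cons ha orbT.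
  rewrite in_cons => /orP [/eqP [ej ek]|hin]; last by left.
  subst j0 k0; right; by rewrite /= e mem_head.
- move=> s t ts acc0 _ <- hrec I Fr _; rewrite /upd /=; case: eqP => [e|ne] /=; last first.
    move=> H1 H2; exact: (Fr _ _ H1 H2).
  by [].
Qed.

Lemma Inv_pres N r th0 s l s' : Inv N r s -> step N r th0 s l s' -> Inv N r s'.
Proof.
move=> I st; split.
- exact: C_rs_pres I st.
- exact: C_clr_pres I st.
- exact: C_rec_pres I st.
- exact: C_used_pres I st.
- exact: C_own_pres I st.
- exact: C_dead_pres I st.
- exact: C_freed_pres I st.
- exact: C_sig_pres I st.
- exact: C_scan_pres I st.
Qed.

Lemma Inv_init N r init : Inv N r (init_state init).
Proof.
constructor.
- by move=> j; split.
- by [].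
- by [].
- by move=> x /= hx; split => //.
- by split => //; split.
- by move=> x /= [[j]|[[j]|]].
- by [].
- by [].
- by [].
Qed.

Lemma Inv_reach N r th0 init s : reachable N r th0 init s -> Inv N r s.
Proof.
elim => [|s0 l s1 _ I st]; first exact: Inv_init.
exact: Inv_pres I st.
Qed.

Theorem lemma6 (N r threshold : nat) (init_nodes : seq node) (s s' : state)
  (t : thread) (x : node) :
  reachable N r threshold init_nodes s ->
  step N r threshold s (Access t x) s' ->
  x \notin freed s.
Proof.
move=> /Inv_reach I st; apply/negP => hf.
have [hl ho] := dead_freed I hf.
inversion st; subst.
- match goal with Ht : is_true (t < N), Hp : pc (th _ t) = Reading, Hv : context [vis (th _ t)] |- _ =>
    have [h1 _] := c_freed I hf Ht; rewrite Hp in h1; by move: (h1 erefl); rewrite Hv end.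
- match goal with Ht : is_true (t < N), Hp : pc (th _ t) = Writing, Hr : reserved_by _ r t x \/ _ |- _ =>
    case: Hr => [[k hk e]|ho']; [
    have [_ [_ h3]] := c_freed I hf Ht; rewrite Hp in h3; exact: (h3 erefl k hk e)
    | by move: (ho t); rewrite ho' ] end.
- match goal with Ho : context [own (th _ t)] |- _ => by move: (ho t); rewrite Ho end.
- match goal with Ho : context [linked _] |- _ => by rewrite Ho in hl end.
Qed.
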